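(* Let $k_{ON},k_{OFF},k_I,\alpha_{p_1},\alpha_{p_2},\gamma_{p_1},\gamma_{m_2},\alpha_{m_2,I},\beta_{m_2,A},T_c>0$, $v_b>1$, $n\ge 1$, and set $a_1=k_{ON}$, $a_3=k_{ON}+k_{OFF}$, $a_4=k_I$, $a_5=\alpha_{p_1}$, $a_6=\gamma_{p_1}$, $a_7=\alpha_{m_2,I}$, $a_8=\gamma_{m_2}+\alpha_{p_1}+\alpha_{p_2}$, $a_9=\beta_{m_2,A}/v_b$, $a_{10}=v_b/T_c^n$, $a_{11}=1/T_c^n$. Consider solutions $(x,y,s,v)$ of \[ \begin{aligned} x' &= a_1 + (a_4-a_1)y - \Big(a_3 + a_9\frac{1+a_{10}v^n}{1+a_{11}v^n}\Big)x,\\ y' &= a_9\frac{1+a_{10}v^n}{1+a_{11}v^n}x - a_4 y,\\ s' &= a_7x - a_8 s,\\ v' &= a_5 s - a_6 v, \end{aligned} \] with nonnegative initial conditions and $x(0)+y(0)\le 1$. Then there exist positive constants $m_x,m_y$ such that $0<m_x\le \liminf_{t\to\infty}x(t)$ and $0<m_y\le\liminf_{t\to\infty}y(t)$.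
   Context: Here $x=\mathrm{LTR}_I$, $y=\mathrm{LTR}_A$, $s=\mathrm{env}_I$, $v=\mathrm{Tat}$ in a model of HIV-1 transcription in which LTR proportions are conserved, $\mathrm{LTR}_R=1-x-y\ge 0$, so that $x,y\in[0,1]$. *)

(* Defs.v *)
From HB Require Import structures.
From mathcomp Require Import all_boot all_order all_algebra.
From mathcomp Require Import all_classical all_reals all_analysis.
Set Implicit Arguments. Unset Strict Implicit. Unset Printing Implicit Defensive.
Import Order.TTheory GRing.Theory Num.Theory.
Import numFieldNormedType.Exports.
Local Open Scope classical_set_scope.
Local Open Scope ring_scope.

Definition liminf_infty (R : realType) (f : R -> R) : \bar R :=
  ereal_sup [set ereal_inf [set (f t)%:E | t in [set t | T <= t]] | T in [set: R]].

(* Main.v *)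
Require Import Defs.
From HB Require Import structures.
From mathcomp Require Import all_boot all_order all_algebra.
From mathcomp Require Import all_classical all_reals all_analysis.
From mathcomp Require Import ring lra.
Import Order.TTheory GRing.Theory Num.Theory.
Import numFieldNormedType.Exports.
Local Open Scope classical_set_scope.
Local Open Scope ring_scope.

Set Implicit Arguments. Unset Strict Implicit.
Section S.
Variable R : realType.

Definition mneg (u : R) : R := if u < 0 then u else 0.
Definition phi (u : R) : R := mneg u ^+ 2.

Lemma mneg_le0 u : mneg u <= 0.
Proof. by rewrite /mneg; case: ltP => // /ltW. Qed.

Lemma phi_taylor u h : `|phi (u + h) - phi u - 2 * mneg u * h| <= h ^+ 2.
Proof.
rewrite /phi /mneg.
case: (ltP u 0) => hu; case: (ltP (u + h) 0) => huh;
  rewrite ler_norml; apply/andP; split; nra.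
Qed.

Lemma is_derive_phi (u : R) : is_derive u (1:R) phi (2 * mneg u).
Proof.
have H : (fun h : R => h^-1 *: ((phi \o shift u) (h *: 1) - phi u)) @ 0^' --> 2 * mneg u.
  apply/cvgrPdist_le => /= e e0.
  near=> h.
  have hn0 : h != 0 by near: h; exact: nbhs_dnbhs_neq.
  have he : `|h| < e by near: h; exact: dnbhs0_lt.
  rewrite /= [h *: 1]mulr1.
  have -> : 2 * mneg u - h^-1 *: (phi (h + u) - phi u)
      = - h^-1 * (phi (u + h) - phi u - 2 * mneg u * h).
    rewrite -[h^-1 *: _]/(h^-1 * _) [h + u]addrC; field; exact: hn0.
  rewrite normrM normrN normrV ?unitfE //.
  rewrite ler_pdivrMl ?normr_gt0 //.
  apply: (le_trans (phi_taylor u h)).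
  rewrite -real_normK ?num_real // expr2.
  by apply: ler_wpM2l => //; exact: ltW.
apply: DeriveDef; first by apply/cvg_ex; exists (2 * mneg u).
exact: cvg_lim H.
Unshelve. all: by end_near.
Qed.

Lemma liminf_lb (f : R -> R) (m T0 : R) :
  (forall t, T0 <= t -> m <= f t) -> (m%:E <= liminf_infty f)%E.
Proof.
move=> Hf; rewrite /liminf_infty.
apply: (@le_trans _ _ (ereal_inf [set (f t)%:E | t in [set t | T0 <= t]])).
  apply: le_ereal_inf_tmp => _ [t /= Ht <-].
  by rewrite lee_fin; exact: Hf.
by apply: ereal_sup_ubound; exists T0.
Qed.

Lemma lower_cmp (f df : R -> R) (T c d : R) : 0 < c -> 0 < d ->
  (forall t, T <= t -> is_derive t (1:R) f (df t)) ->
  (forall t, T <= t -> d - c * f t <= df t) ->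
  exists T', forall t, T' <= t -> d / (2 * c) <= f t.
Proof.
move=> c0 d0 Hd Hi.
pose g := fun t => expR (c * t) * (f t - d / c).
have Hg : forall t, T <= t -> is_derive t (1:R) g (expR (c * t) * (df t + c * f t - d)).
  move=> t Ht.
  have E1 : is_derive t (1:R) (fun t => expR (c * t)) (expR (c * t) * c).
    apply: (@is_derive1_comp _ expR (fun t => c * t)).
    have := @is_deriveZ R R R id c t 1 1 (is_derive_id t 1).
    by rewrite -[c%:A]/(c * 1) mulr1.
  have E2 : is_derive t (1:R) (fun t => f t - d / c) (df t - 0).
    apply: is_deriveB; first exact: Hd.
  have := is_deriveM E1 E2.
  move=> H; apply: is_derive_eq.
  rewrite subr0 /GRing.scale /=. field. by rewrite gt_eqF.
have Hmono : forall t, T <= t -> g T <= g t.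
  move=> t Ht.
  apply: (@ger0_derive1_ndecry R g T) => //.
  - move=> u; rewrite in_itv /= andbT => /ltW Hu.
    by have [] := Hg u Hu.
  - move=> u; rewrite in_itv /= andbT => /ltW Hu.
    rewrite derive1E (@derive_val _ _ _ _ _ _ _ (Hg u Hu)).
    apply: mulr_ge0; first exact: ltW (expR_gt0 _).
    by have := Hi u Hu; lra.
  - apply: derivable_within_continuous => u; rewrite in_itv /= andbT => Hu.
    by have [] := Hg u Hu.
set K := g T.
exists (Num.max T (2 * `|K| / d)) => t.
rewrite ge_max => /andP [HT Ht].
set E := expR (c * t).
have Hgt : K <= E * (f t - d / c) := Hmono t HT.
have E0 : 0 < E by exact: expR_gt0.
have HE : c * t < E.
  by have := expR_ge1Dx (c * t); rewrite -/E; lra.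
have HK : `|K| <= E * (d / (2 * c)).
  have H1 : 2 * `|K| / d * c <= c * t by rewrite mulrC ler_pM2l.
  have H2 : 2 * `|K| / d * c < E by lra.
  have -> : E * (d / (2 * c)) = (E * d) / (2 * c) by rewrite mulrA.
  rewrite ler_pdivlMr ?mulr_gt0 //.
  have H3 : 2 * `|K| / d * c * d < E * d by rewrite ltr_pM2r.
  have H4 : 2 * `|K| / d * c * d = `|K| * (2 * c) by field; rewrite gt_eqF.
  rewrite H4 in H3; exact: ltW.
have Hu : 0 <= E * (f t - d / c + d / (2 * c)).
  have := ler_norm (- K); rewrite normrN; rewrite mulrDr; lra.
have := Hu; rewrite pmulr_rge0 // => Hu'.
have -> : d / (2 * c) = d / c - d / (2 * c) by field; rewrite gt_eqF.
lra.
Qed.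

Lemma mneg_sq (a : R) : mneg a * a = mneg a ^+ 2.
Proof. by rewrite /mneg expr2; case: ltP => _; rewrite ?mul0r. Qed.

Lemma mneg_mul (a b : R) : mneg a * b <= mneg a * mneg b.
Proof.
rewrite /mneg; case: (ltP a 0) => ha; case: (ltP b 0) => hb; nra.
Qed.

Lemma phi_ge0 (a : R) : 0 <= phi a.
Proof. by rewrite /phi sqr_ge0. Qed.

Lemma phi0 (a : R) : 0 <= a -> phi a = 0.
Proof. rewrite /phi /mneg => ha; case: ltP => hb; [lra | by rewrite expr2 mul0r]. Qed.

Lemma phi_eq0 (a : R) : phi a = 0 -> 0 <= a.
Proof.
rewrite /phi /mneg; case: ltP => // ha /eqP; rewrite expf_eq0 /= => /eqP; lra.
Qed.

Lemma phi_cont : continuous phi.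
Proof.
move=> u; apply: differentiable_continuous; apply/derivable1_diffP.
by have [] := is_derive_phi u.
Qed.

End S.
Arguments phi {R}. Arguments mneg {R}.


Section P.
Variable R : realType.

Lemma positivity (x y hf : R -> R) (a1 a4 k c : R) :
  0 < a1 -> 0 < a4 -> 0 < k -> 0 < c ->
  (forall t, 0 <= hf t <= c) ->
  {within `[0, +oo[, continuous x} -> {within `[0, +oo[, continuous y} ->
  (forall t : R, 0 < t -> is_derive t (1:R) x (a1 + (a4 - a1) * y t - (a1 + k + hf t) * x t)) ->
  (forall t : R, 0 < t -> is_derive t (1:R) y (hf t * x t - a4 * y t)) ->
  0 <= x 0 -> 0 <= y 0 -> x 0 + y 0 <= 1 ->
  forall t, 0 <= t -> 0 <= x t /\ 0 <= y t /\ x t + y t <= 1.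
Proof.
move=> a10 a40 k0 c0 hb cx cy dx dy x0 y0 xy0.
pose C := a1 + k + a4 + c.
pose N := fun t : R => phi (x t) + phi (y t) + phi (1 - x t - y t).
pose G := fun t : R => expR (- C * t) * N t.
pose dX := fun t : R => a1 + (a4 - a1) * y t - (a1 + k + hf t) * x t.
pose dY := fun t : R => hf t * x t - a4 * y t.
pose Nd := fun t : R => 2 * mneg (x t) * dX t + 2 * mneg (y t) * dY t
   + 2 * mneg (1 - x t - y t) * (- dX t - dY t).
have HN : forall t : R, 0 < t -> is_derive t (1:R) N (Nd t).
  move=> t t0.
  have E1 : is_derive t (1:R) (phi \o x) (2 * mneg (x t) * dX t).
    exact: (is_derive1_comp (is_derive_phi _) (dx t t0)).
  have E2 : is_derive t (1:R) (phi \o y) (2 * mneg (y t) * dY t).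
    exact: (is_derive1_comp (is_derive_phi _) (dy t t0)).
  have Ez : is_derive t (1:R) (fun t : R => 1 - x t - y t) (- dX t - dY t).
    have := is_deriveB (is_deriveB (is_derive_cst (1:R) t (1:R)) (dx t t0)) (dy t t0).
    by rewrite sub0r.
  have E3 : is_derive t (1:R) (phi \o (fun t : R => 1 - x t - y t))
      (2 * mneg (1 - x t - y t) * (- dX t - dY t)).
    exact: (is_derive1_comp (is_derive_phi _) Ez).
  exact: is_deriveD (is_deriveD E1 E2) E3.
have HG : forall t : R, 0 < t -> is_derive t (1:R) G (expR (- C * t) * (Nd t - C * N t)).
  move=> t t0.
  have E1 : is_derive t (1:R) (fun t : R => expR (- C * t)) (expR (- C * t) * (- C)).
    apply: (@is_derive1_comp _ expR (fun t : R => - C * t)).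
    have := @is_deriveZ R R R id (- C) t 1 1 (is_derive_id t 1).
    by rewrite -[(- C)%:A]/(- C * 1) mulr1.
  have := is_deriveM E1 (HN t t0).
  move=> H; apply: is_derive_eq.
  rewrite /GRing.scale /=. ring.
have Hd : forall t : R, 0 < t -> Nd t - C * N t <= 0.
  move=> t t0.
  rewrite /Nd /N /phi /dX /dY.
  have hX := mneg_le0 (x t). have hY := mneg_le0 (y t).
  have hZ := mneg_le0 (1 - x t - y t).
  have q1 := mneg_sq (x t). have q2 := mneg_sq (y t).
  have q3 := mneg_sq (1 - x t - y t).
  have m1 := mneg_mul (x t) (y t). have m2 := mneg_mul (x t) (1 - x t - y t).
  have m3 := mneg_mul (y t) (x t). have m4 := mneg_mul (1 - x t - y t) (x t).
  have [h0 hc] := andP (hb t).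
  rewrite /C.
  move: hX hY hZ q1 q2 q3 m1 m2 m3 m4 h0 hc.
  move: (x t) (y t) (hf t) (mneg (1 - x t - y t)) (mneg (y t)) (mneg (x t)).
  clear -a10 a40 k0 c0.
  move=> xx yy h Z Y X hX hY hZ q1 q2 q3 m1 m2 m3 m4 h0 hc.
  have S1 : X * (a1 + (a4 - a1) * yy - (a1 + k + h) * xx) <= a1 * (X * Z) + a4 * (X * Y).
    have -> : X * (a1 + (a4 - a1) * yy - (a1 + k + h) * xx)
       = a1 * (X * (1 - xx - yy)) + a4 * (X * yy) - (k + h) * (X * xx) by ring.
    rewrite q1.
    have := ler_wpM2l (ltW a10) m2. have := ler_wpM2l (ltW a40) m1.
    have : 0 <= (k + h) * X ^+ 2 by apply: mulr_ge0; [apply: addr_ge0; [exact: ltW| exact: h0] | exact: sqr_ge0].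
    lra.
  have S2 : Y * (h * xx - a4 * yy) <= h * (X * Y).
    have -> : Y * (h * xx - a4 * yy) = h * (Y * xx) - a4 * (Y * yy) by ring.
    rewrite q2.
    have := ler_wpM2l h0 m3.
    have : 0 <= a4 * Y ^+ 2 by apply: mulr_ge0; [exact: ltW | exact: sqr_ge0].
    rewrite [Y * X]mulrC. lra.
  have S3 : Z * (- (a1 + (a4 - a1) * yy - (a1 + k + h) * xx) - (h * xx - a4 * yy))
      <= k * (X * Z).
    have -> : Z * (- (a1 + (a4 - a1) * yy - (a1 + k + h) * xx) - (h * xx - a4 * yy))
       = k * (Z * xx) - a1 * (Z * (1 - xx - yy)) by ring.
    rewrite q3.
    have := ler_wpM2l (ltW k0) m4.
    have : 0 <= a1 * Z ^+ 2 by apply: mulr_ge0; [exact: ltW | exact: sqr_ge0].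
    rewrite [Z * X]mulrC. lra.
  have XY0 : 0 <= X * Y by apply: mulr_le0.
  have S4 : h * (X * Y) <= c * (X * Y) by apply: ler_wpM2r.
  have S5 : 2 * (X * Z) <= X ^+ 2 + Z ^+ 2.
    have := sqr_ge0 (X - Z); rewrite !expr2; lra.
  have S6 : 2 * (X * Y) <= X ^+ 2 + Y ^+ 2.
    have := sqr_ge0 (X - Y); rewrite !expr2; lra.
  have T1 := ler_wpM2l (ltW (addr_gt0 a10 k0)) S5.
  have T2 := ler_wpM2l (ltW (addr_gt0 a40 c0)) S6.
  have Y2 := sqr_ge0 Y. have X2 := sqr_ge0 X. have Z2 := sqr_ge0 Z.
  have T3 : 0 <= (a1 + k) * Y ^+ 2 by apply: mulr_ge0 => //; lra.
  have T4 : 0 <= (a4 + c) * Z ^+ 2 by apply: mulr_ge0 => //; lra.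
  clear -S1 S2 S3 S4 T1 T2 T3 T4.
  lra.
have cG : {within `[0, +oo[, continuous G}.
  have ce : continuous (fun u : R => expR (- C * u)).
    move=> u; apply: differentiable_continuous; apply/derivable1_diffP.
    have E1 : is_derive u (1:R) (fun t : R => expR (- C * t)) (expR (- C * u) * (- C)).
      apply: (@is_derive1_comp _ expR (fun t : R => - C * t)).
      have := @is_deriveZ R R R id (- C) u 1 1 (is_derive_id u 1).
      by rewrite -[(- C)%:A]/(- C * 1) mulr1.
    by have [] := E1.
  move=> t.
  have h1 : {for t, continuous (from_subspace [set` `[0, +oo[] (fun u : R => expR (- C * u)))} := (@continuous_subspaceT R R `[0, +oo[%classic _ ce) t.
  have h2 := continuous_comp (cx t) (@phi_cont R _).
  have h3 := continuous_comp (cy t) (@phi_cont R _).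
  have h4 : {for t, continuous (from_subspace [set` `[0, +oo[] (fun u : R => 1 - x u - y u))}.
    apply: continuousB; last exact: (cy t).
    apply: continuousB; last exact: (cx t).
    exact: cvg_cst.
  have h5 := continuous_comp h4 (@phi_cont R _).
  exact: (continuousM h1 (continuousD (continuousD h2 h3) h5)).
have Hder : forall u : R, u \in `]0, +oo[ -> derivable G u 1.
  move=> u; rewrite in_itv /= andbT => Hu.
  by have [] := HG u Hu.
have Hle : forall u : R, u \in `]0, +oo[ -> derive1 G u <= 0.
  move=> u; rewrite in_itv /= andbT => Hu.
  rewrite derive1E (@derive_val _ _ _ _ _ _ _ (HG u Hu)).
  rewrite pmulr_rle0; last exact: expR_gt0.
  exact: Hd.
have Hmono : forall t : R, 0 <= t -> G t <= G 0.
  move=> t Ht.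
  exact: (@ler0_derive1_nincry R G 0 Hder Hle cG 0 t (lexx 0) Ht).
have N0 : N 0 = 0.
  have z0 : 0 <= 1 - x 0 - y 0 by clear -xy0; lra.
  by rewrite /N !phi0 ?addr0.
move=> t Ht.
have Gt := Hmono t Ht.
have G0 : G 0 = 0 by rewrite /G N0 mulr0.
rewrite G0 /G in Gt.
have Nt0 : N t <= 0.
  by move: Gt; rewrite pmulr_rle0 //; exact: expR_gt0.
have p1 := phi_ge0 (x t). have p2 := phi_ge0 (y t). have p3 := phi_ge0 (1 - x t - y t).
rewrite /N in Nt0.
have e1 : phi (x t) = 0 by clear -p1 p2 p3 Nt0; lra.
have e2 : phi (y t) = 0 by clear -p1 p2 p3 Nt0; lra.
have e3 : phi (1 - x t - y t) = 0 by clear -p1 p2 p3 Nt0; lra.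
have := phi_eq0 e1; have := phi_eq0 e2; have := phi_eq0 e3.
clear; lra.
Qed.
End P.

Unset Implicit Arguments.
Theorem proposition3p1 (R : realType)
  (kON kOFF kI alpha_p1 alpha_p2 gamma_p1 gamma_m2 alpha_m2I beta_m2A Tc vb n : R)
  (hkON : 0 < kON) (hkOFF : 0 < kOFF) (hkI : 0 < kI)
  (hap1 : 0 < alpha_p1) (hap2 : 0 < alpha_p2) (hgp1 : 0 < gamma_p1)
  (hgm2 : 0 < gamma_m2) (ham2I : 0 < alpha_m2I) (hbm2A : 0 < beta_m2A)
  (hTc : 0 < Tc) (hvb : 1 < vb) (hn : 1 <= n)
  (x y s v : R -> R) :
  let a1 := kON in
  let a3 := kON + kOFF in
  let a4 := kI in
  let a5 := alpha_p1 in
  let a6 := gamma_p1 in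
  let a7 := alpha_m2I in
  let a8 := gamma_m2 + alpha_p1 + alpha_p2 in
  let a9 := beta_m2A / vb in
  let a10 := vb / (Tc `^ n) in
  let a11 := 1 / (Tc `^ n) in
  let H := fun w : R => a9 * ((1 + a10 * w `^ n) / (1 + a11 * w `^ n)) in
  (* the solution is continuous on [0, +oo) ... *)
  {within `[0, +oo[, continuous x} ->
  {within `[0, +oo[, continuous y} ->
  {within `[0, +oo[, continuous s} ->
  {within `[0, +oo[, continuous v} ->
  (* ... and satisfies the ODE system for t > 0 *)
  (forall t : R, 0 < t ->
     is_derive t 1 x (a1 + (a4 - a1) * y t - (a3 + H (v t)) * x t)) ->
  (forall t : R, 0 < t -> is_derive t 1 y (H (v t) * x t - a4 * y t)) ->
  (forall t : R, 0 < t -> is_derive t 1 s (a7 * x t - a8 * s t)) ->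
  (forall t : R, 0 < t -> is_derive t 1 v (a5 * s t - a6 * v t)) ->
  (* nonnegative initial conditions with x(0) + y(0) <= 1 *)
  0 <= x 0 -> 0 <= y 0 -> 0 <= s 0 -> 0 <= v 0 -> x 0 + y 0 <= 1 ->
  exists mx my : R, 0 < mx /\ 0 < my /\
    (mx%:E <= liminf_infty x)%E /\ (my%:E <= liminf_infty y)%E.
Proof.
move=> a1 a3 a4 a5 a6 a7 a8 a9 a10 a11 H cx cy cs cv dx dy ds dv x0 y0 s0 v0 xy0.
have a90 : 0 < a9 by rewrite /a9 divr_gt0 // (lt_trans ltr01).
have vb0 : 0 < vb by rewrite (lt_trans ltr01).
have Hb : forall w, a9 <= H w <= a9 * vb.
  move=> w; rewrite /H.
  have P0 : 0 < Tc `^ n by rewrite powR_gt0.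
  have u0 : 0 <= w `^ n by rewrite powR_ge0.
  set P := Tc `^ n in P0 *. set u := w `^ n in u0 *.
  have q0 : 0 <= u / P by rewrite divr_ge0 // ltW.
  have -> : a10 * u = vb * (u / P) by rewrite /a10 mulrAC mulrA.
  have -> : a11 * u = u / P by rewrite /a11 mul1r mulrC.
  set q := u / P in q0 *.
  have d0 : 0 < 1 + q by lra.
  apply/andP; split.
    rewrite ler_pMr // ler_pdivlMr // mul1r.
    have : q <= vb * q by rewrite ler_peMl // ltW.
    lra.
  rewrite ler_pM2l // ler_pdivrMr //.
  have : q <= vb * q by rewrite ler_peMl // ltW.
  have : 1 <= vb by exact: ltW.
  move=> *; rewrite mulrDr mulr1; lra.
set cb := a9 * vb.
have cb0 : 0 < cb by rewrite mulr_gt0.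
have hb : forall t, 0 <= H (v t) <= cb.
  move=> t; have /andP[h1 h2] := Hb (v t); apply/andP; split => //.
  exact: ltW (lt_le_trans a90 h1).
have pos := @positivity R x y (fun t => H (v t)) kON kI kOFF cb hkON hkI hkOFF cb0
  hb cx cy dx dy x0 y0 xy0.
set mu := Num.min kON kI.
have mu0 : 0 < mu by rewrite lt_min hkON hkI.
have muON : mu <= kON by rewrite ge_min lexx.
have muI : mu <= kI by rewrite ge_min lexx orbT.
set cx1 := mu + kOFF + cb.
have cx10 : 0 < cx1 by rewrite /cx1 !addr_gt0.
have Hi1 : forall t, 1 <= t -> mu - cx1 * x t <= a1 + (a4 - a1) * y t - (a3 + H (v t)) * x t.
  move=> t Ht; have [p1 [p2 p3]] := pos t (le_trans ler01 Ht).
  have /andP[h0 h1] := hb t.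
  have z0 : 0 <= 1 - x t - y t by lra.
  have f1 := ler_wpM2r z0 muON.
  have f2 := ler_wpM2r p2 muI.
  have f3 := ler_wpM2r p1 h1.
  rewrite /a1 /a3 /a4 /cx1.
  clear -f1 f2 f3 p1 p2 p3.
  lra.
have [T1 HT1] := @lower_cmp R x
  (fun t => a1 + (a4 - a1) * y t - (a3 + H (v t)) * x t) 1 cx1 mu cx10 mu0
  (fun t Ht => dx t (lt_le_trans ltr01 Ht)) Hi1.
set mx := mu / (2 * cx1).
have mx0 : 0 < mx by rewrite /mx divr_gt0 // mulr_gt0.
have d0 : 0 < a9 * mx by rewrite mulr_gt0.
have Hi2 : forall t, Num.max 1 T1 <= t -> a9 * mx - kI * y t <= H (v t) * x t - a4 * y t.
  move=> t Ht.
  move: Ht; rewrite ge_max => /andP[_ Ht1].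
  have xm := HT1 t Ht1.
  have /andP[h0 h1] := Hb (v t).
  have f := ler_pM (ltW a90) (ltW mx0) h0 xm.
  rewrite /a4.
  clear -f. lra.
have Hdy : forall t, Num.max 1 T1 <= t -> is_derive t (1:R) y (H (v t) * x t - a4 * y t).
  move=> t; rewrite ge_max => /andP[Ht _]; apply: dy.
  exact: lt_le_trans ltr01 Ht.
have [T2 HT2] := @lower_cmp R y (fun t => H (v t) * x t - a4 * y t)
  (Num.max 1 T1) kI (a9 * mx) hkI d0
  Hdy Hi2.
exists mx, (a9 * mx / (2 * kI)).
split => //; split; first by rewrite divr_gt0 // mulr_gt0.
split; [exact: liminf_lb HT1 | exact: liminf_lb HT2].
Qed.
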